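(* Let $\{|\mu_0\rangle,|\mu_1\rangle\}$ and $\{|\nu_0\rangle,|\nu_1\rangle\}$ be orthonormal bases of $\mathbb{C}^2$, $N$ the projective measurement $\{|\nu_0\rangle\langle\nu_0|,|\nu_1\rangle\langle\nu_1|\}$, and $c=\max_{x,y}|\langle\mu_x|\nu_y\rangle|^2$. Let $a\in\{0,1\}$, $w\in[0,1]$, $\delta>0$, and let $J\subseteq\{i\in\{0,1\}^n: w_a(i)\le w+\delta\}$. Let $\mathcal{H}_C$ be any finite-dimensional Hilbert space and let $$|\phi'\rangle=\sum_{i\in J}\alpha_i\,|\mu_{i_1}\rangle\otimes\cdots\otimes|\mu_{i_n}\rangle\otimes|C_i\rangle\in(\mathbb{C}^2)^{\otimes n}\otimes\mathcal{H}_C$$ be a unit vector, where $|C_i\rangle\in\mathcal{H}_C$ are arbitrary unit vectors (not necessarily orthogonal). Then the reduced state $\sigma=\mathrm{tr}_C|\phi'\rangle\langle\phi'|$ on the $n$ qubits satisfies $$H_\infty(N)_\sigma\ \ge\ -n\log_2 c-n\,\bar H(w+\delta).$$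
   Context: $w_a(i)=|\{l: i_l\ne a\}|/n$ is the relative $a$-Hamming weight. $\bar H(x)=-x\log_2x-(1-x)\log_2(1-x)$ for $x\in[0,1/2]$, $\bar H(x)=0$ for $x<0$, $\bar H(x)=1$ for $x>1/2$. For a state $\sigma$ on $(\mathbb{C}^2)^{\otimes n}$, $H_\infty(N)_\sigma=-\log_2\max_{j\in\{0,1\}^n}\langle\nu_{j_1}\cdots\nu_{j_n}|\sigma|\nu_{j_1}\cdots\nu_{j_n}\rangle$. *)

(* Defs.v *)
From Stdlib Require Import Reals List.
Import ListNotations.
Open Scope R_scope.

Definition Cx : Type := (R * R)%type.
Definition C0 : Cx := (0, 0).
Definition Cadd (z w : Cx) : Cx := (fst z + fst w, snd z + snd w).
Definition Cmul (z w : Cx) : Cx :=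
  (fst z * fst w - snd z * snd w, fst z * snd w + snd z * fst w).
Definition Cconj (z : Cx) : Cx := (fst z, - snd z).
Definition Cnorm2 (z : Cx) : R := fst z * fst z + snd z * snd z.

Definition Csum {A : Type} (l : list A) (f : A -> Cx) : Cx :=
  fold_right (fun x acc => Cadd (f x) acc) C0 l.
Definition Rsum {A : Type} (l : list A) (f : A -> R) : R :=
  fold_right (fun x acc => f x + acc) 0 l.

(** * Qubit space C^2: vectors are functions bool -> C (basis |0>,|1>) *)
Definition qubit := bool -> Cx.
Definition inner2 (u v : qubit) : Cx :=
  Cadd (Cmul (Cconj (u false)) (v false)) (Cmul (Cconj (u true)) (v true)).
Definition Ckron (b1 b2 : bool) : Cx := if Bool.eqb b1 b2 then (1, 0) else C0.
Definition orthonormal_basis (e : bool -> qubit) : Prop :=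
  forall x y, inner2 (e x) (e y) = Ckron x y.

Fixpoint bitstrings (n : nat) : list (list bool) :=
  match n with
  | O => [ [] ]
  | S m => map (cons false) (bitstrings m) ++ map (cons true) (bitstrings m)
  end.

Definition weight (a : bool) (i : list bool) : R :=
  INR (length (filter (fun b => negb (Bool.eqb b a)) i)) / INR (length i).

(** product vector |e_{i_1}> ⊗ ... ⊗ |e_{i_n}>, as a function of the
    computational-basis index x ∈ {0,1}^n (coordinates of a tensor product) *)
Fixpoint prod_vec (e : bool -> qubit) (i x : list bool) : Cx :=
  match i, x with
  | [], [] => (1, 0)
  | b :: i', y :: x' => Cmul (e b y) (prod_vec e i' x')
  | _, _ => C0
  end.

Definition log2 (x : R) : R := ln x / ln 2.

Definition Hbar (x : R) : R :=
  if Rlt_dec x 0 then 0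
  else if Rle_dec x (1/2) then
         (if Req_EM_T x 0 then 0 else - x * log2 x - (1 - x) * log2 (1 - x))
       else 1.

Definition overlap_c (mu nu : bool -> qubit) : R :=
  Rmax (Rmax (Cnorm2 (inner2 (mu false) (nu false))) (Cnorm2 (inner2 (mu false) (nu true))))
       (Rmax (Cnorm2 (inner2 (mu true) (nu false))) (Cnorm2 (inner2 (mu true) (nu true)))).

(** * The state |phi'> in (C^2)^{⊗n} ⊗ C^d.
    Its coordinate at (x, k), x ∈ {0,1}^n, k < d:
    sum_{i ∈ J} alpha_i <x|mu_{i_1}...mu_{i_n}> C_i(k) *)
Definition phi_state (n : nat) (mu : bool -> qubit) (J : list bool -> bool)
  (alpha : list bool -> Cx) (Cv : list bool -> nat -> Cx) (x : list bool) (k : nat) : Cx :=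
  Csum (filter J (bitstrings n)) (fun i => Cmul (alpha i) (Cmul (prod_vec mu i x) (Cv i k))).

Definition normC_sq (d : nat) (v : nat -> Cx) : R := Rsum (seq 0 d) (fun k => Cnorm2 (v k)).

Definition norm_joint_sq (n d : nat) (phi : list bool -> nat -> Cx) : R :=
  Rsum (bitstrings n) (fun x => Rsum (seq 0 d) (fun k => Cnorm2 (phi x k))).

(** reduced state sigma = tr_C |phi><phi|, matrix entries <x|sigma|y> *)
Definition partial_trace_C (d : nat) (phi : list bool -> nat -> Cx) (x y : list bool) : Cx :=
  Csum (seq 0 d) (fun k => Cmul (phi x k) (Cconj (phi y k))).

Definition expect (n : nat) (sigma : list bool -> list bool -> Cx) (v : list bool -> Cx) : Cx :=
  Csum (bitstrings n) (fun x => Csum (bitstrings n) (fun y =>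
    Cmul (Cconj (v x)) (Cmul (sigma x y) (v y)))).

(** max of a real function over a list (0 on the empty list; never empty here) *)
Definition Rmax_list {A : Type} (l : list A) (f : A -> R) : R :=
  match l with
  | [] => 0
  | x :: l' => fold_right (fun y acc => Rmax (f y) acc) (f x) l'
  end.

Definition Hmin_N (n : nat) (nu : bool -> qubit) (sigma : list bool -> list bool -> Cx) : R :=
  - log2 (Rmax_list (bitstrings n) (fun j => fst (expect n sigma (prod_vec nu j)))).

(* Main.v *)
Require Import Defs.
From Stdlib Require Import Reals List Lra Lia Psatz.
Import ListNotations.
Open Scope R_scope.

Ltac ceq := repeat match goal with z : Cx |- _ => destruct z end;
  unfold Cadd, Cmul, Cconj, C0, Cnorm2; apply injective_projections; simpl; ring.

Lemma Csum_ext {A} (l : list A) f g : (forall x, In x l -> f x = g x) -> Csum l f = Csum l g.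
Proof. induction l; simpl; intros H; auto. rewrite H, IHl; auto. Qed.
Lemma Rsum_ext {A} (l : list A) f g : (forall x, In x l -> f x = g x) -> Rsum l f = Rsum l g.
Proof. induction l; simpl; intros H; auto. rewrite H, IHl; auto. Qed.
Lemma Csum_app {A} (l1 l2 : list A) f : Csum (l1 ++ l2) f = Cadd (Csum l1 f) (Csum l2 f).
Proof. induction l1; simpl. ceq. rewrite IHl1. ceq. Qed.
Lemma Rsum_app {A} (l1 l2 : list A) f : Rsum (l1 ++ l2) f = Rsum l1 f + Rsum l2 f.
Proof. induction l1; simpl. ring. rewrite IHl1. ring. Qed.
Lemma Csum_map {A B} (l : list A) (h : A -> B) f : Csum (map h l) f = Csum l (fun x => f (h x)).
Proof. induction l; simpl; auto. rewrite IHl; auto. Qed.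
Lemma Rsum_map {A B} (l : list A) (h : A -> B) f : Rsum (map h l) f = Rsum l (fun x => f (h x)).
Proof. induction l; simpl; auto. rewrite IHl; auto. Qed.
Lemma Csum_zero {A} (l : list A) : Csum l (fun _ => C0) = C0.
Proof. induction l; simpl; auto. rewrite IHl. ceq. Qed.
Lemma Rsum_zero {A} (l : list A) : Rsum l (fun _ => 0) = 0.
Proof. induction l; simpl; auto. rewrite IHl. ring. Qed.
Lemma Csum_add {A} (l : list A) f g : Csum l (fun x => Cadd (f x) (g x)) = Cadd (Csum l f) (Csum l g).
Proof. induction l; simpl. ceq. rewrite IHl. ceq. Qed.
Lemma Rsum_add {A} (l : list A) f g : Rsum l (fun x => f x + g x) = Rsum l f + Rsum l g.
Proof. induction l; simpl. ring. rewrite IHl. ring. Qed.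
Lemma Csum_scale {A} (l : list A) c f : Csum l (fun x => Cmul c (f x)) = Cmul c (Csum l f).
Proof. induction l; simpl. ceq. rewrite IHl. ceq. Qed.
Lemma Rsum_scale {A} (l : list A) c f : Rsum l (fun x => c * f x) = c * Rsum l f.
Proof. induction l; simpl. ring. rewrite IHl. ring. Qed.
Lemma Csum_swap {A B} (l1 : list A) (l2 : list B) f :
  Csum l1 (fun x => Csum l2 (fun y => f x y)) = Csum l2 (fun y => Csum l1 (fun x => f x y)).
Proof. induction l1; simpl. rewrite Csum_zero; auto. rewrite IHl1, Csum_add; auto. Qed.
Lemma Rsum_swap {A B} (l1 : list A) (l2 : list B) f :
  Rsum l1 (fun x => Rsum l2 (fun y => f x y)) = Rsum l2 (fun y => Rsum l1 (fun x => f x y)).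
Proof. induction l1; simpl. rewrite Rsum_zero; auto. rewrite IHl1, Rsum_add; auto. Qed.
Lemma Csum_conj {A} (l : list A) f : Cconj (Csum l f) = Csum l (fun x => Cconj (f x)).
Proof. induction l; simpl. ceq. rewrite <- IHl. ceq. Qed.
Lemma fst_Csum {A} (l : list A) f : fst (Csum l f) = Rsum l (fun x => fst (f x)).
Proof. induction l; simpl; auto. rewrite IHl; auto. Qed.
Lemma Csum_filter {A} (l : list A) (J : A -> bool) f :
  Csum (filter J l) f = Csum l (fun x => if J x then f x else C0).
Proof. induction l; simpl; auto. destruct (J a); simpl; rewrite IHl; auto. ceq. Qed.
Lemma Rsum_filter {A} (l : list A) (J : A -> bool) f :
  Rsum (filter J l) f = Rsum l (fun x => if J x then f x else 0).
Proof. induction l; simpl; auto. destruct (J a); simpl; rewrite IHl; auto. ring. Qed.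
Lemma Rsum_le {A} (l : list A) f g : (forall x, In x l -> f x <= g x) -> Rsum l f <= Rsum l g.
Proof. induction l; simpl; intros H. lra. assert (f a <= g a) by auto. assert (Rsum l f <= Rsum l g) by auto. lra. Qed.
Lemma Rsum_const {A} (l : list A) c : Rsum l (fun _ => c) = INR (length l) * c.
Proof. induction l; [simpl; ring|]. replace (INR (length (a :: l))) with (INR (length l) + 1) by (rewrite <- S_INR; reflexivity). simpl. rewrite IHl. ring. Qed.
Lemma Cnorm2_ge0 z : 0 <= Cnorm2 z.
Proof. unfold Cnorm2. nra. Qed.
Lemma Cnorm2_mul z w : Cnorm2 (Cmul z w) = Cnorm2 z * Cnorm2 w.
Proof. destruct z, w; unfold Cnorm2, Cmul; simpl; ring. Qed.
Lemma Cnorm2_conj z : Cnorm2 (Cconj z) = Cnorm2 z.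
Proof. destruct z; unfold Cnorm2, Cconj; simpl; ring. Qed.

Lemma bits_len n x : In x (bitstrings n) <-> length x = n.
Proof.
  revert x; induction n; intros x; simpl.
  - split. intros [<-|[]]; auto. destruct x; simpl; try discriminate; auto.
  - rewrite in_app_iff, !in_map_iff. split.
    + intros [[y [<- Hy]]|[y [<- Hy]]]; simpl; f_equal; apply IHn; auto.
    + destruct x as [|b x]; simpl; try discriminate. intros H; injection H; intros H'.
      destruct b; [right|left]; exists x; split; auto; apply IHn; auto.
Qed.

Lemma bits_nodup n : NoDup (bitstrings n).
Proof.
  induction n; simpl. constructor. intros []. constructor.
  apply NoDup_app.
  - apply NoDup_map_NoDup_ForallPairs; auto. intros x y _ _ H; injection H; auto.
  - apply NoDup_map_NoDup_ForallPairs; auto. intros x y _ _ H; injection H; auto.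
  - intros a H1 H2. apply in_map_iff in H1, H2. destruct H1 as [y [<- _]]. destruct H2 as [z [H _]]. discriminate.
Qed.

Lemma rows (p1 p2 q1 q2 r1 r2 s1 s2 : R) :
  p1*p1+p2*p2+q1*q1+q2*q2 = 1 -> r1*r1+r2*r2+s1*s1+s2*s2 = 1 ->
  p1*r1+p2*r2+q1*s1+q2*s2 = 0 -> p1*r2-p2*r1+q1*s2-q2*s1 = 0 ->
  p1*p1+p2*p2+r1*r1+r2*r2 = 1 /\ q1*q1+q2*q2+s1*s1+s2*s2 = 1 /\
  p1*q1+p2*q2+r1*s1+r2*s2 = 0 /\ p2*q1-p1*q2+r2*s1-r1*s2 = 0.
Proof.
  intros H1 H2 H3 H4.
  assert (E : (p1*p1+p2*p2)*(r1*r1+r2*r2) = (q1*q1+q2*q2)*(s1*s1+s2*s2)).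
  { assert (e1 : (p1*r1+p2*r2)^2 + (p1*r2-p2*r1)^2 = (p1*p1+p2*p2)*(r1*r1+r2*r2)) by ring.
    assert (e2 : (q1*s1+q2*s2)^2 + (q1*s2-q2*s1)^2 = (q1*q1+q2*q2)*(s1*s1+s2*s2)) by ring.
    replace (p1*r1+p2*r2) with (-(q1*s1+q2*s2)) in e1 by lra.
    replace (p1*r2-p2*r1) with (-(q1*s2-q2*s1)) in e1 by lra. nra. }
  replace (q1*q1+q2*q2) with (1 - (p1*p1+p2*p2)) in E by lra.
  replace (s1*s1+s2*s2) with (1 - (r1*r1+r2*r2)) in E by lra.
  assert (PR : p1*p1+p2*p2+r1*r1+r2*r2 = 1) by nra.
  split; [exact PR|]. split; [lra|].
  assert (PS : p1*p1+p2*p2 - (s1*s1+s2*s2) = 0) by lra.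
  assert (QR : r1*r1+r2*r2 - (q1*q1+q2*q2) = 0) by lra.
  remember (p1*r1+p2*r2+q1*s1+q2*s2) as Z1.
  remember (p1*r2-p2*r1+q1*s2-q2*s1) as Z2.
  remember (p1*p1+p2*p2 - (s1*s1+s2*s2)) as D1.
  remember (r1*r1+r2*r2 - (q1*q1+q2*q2)) as D2.
  remember (p1*q1+p2*q2+r1*s1+r2*s2) as X1.
  remember (p2*q1-p1*q2+r2*s1-r1*s2) as X2.
  assert (W1 : p1*X1+p2*X2 = q1*D1 + Z1*s1 + Z2*s2) by (subst; ring).
  assert (W2 : p1*X2-p2*X1 = -q2*D1 + Z2*s1 - Z1*s2) by (subst; ring).
  assert (V1 : r1*X1+r2*X2 = s1*D2 + Z1*q1 - Z2*q2) by (subst; ring).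
  assert (V2 : r1*X2-r2*X1 = -s2*D2 - (Z1*q2+Z2*q1)) by (subst; ring).
  assert (F1 : (p1*p1+p2*p2+r1*r1+r2*r2)*X1 = p1*(p1*X1+p2*X2) - p2*(p1*X2-p2*X1) + r1*(r1*X1+r2*X2) - r2*(r1*X2-r2*X1)) by ring.
  assert (F2 : (p1*p1+p2*p2+r1*r1+r2*r2)*X2 = p2*(p1*X1+p2*X2) + p1*(p1*X2-p2*X1) + r2*(r1*X1+r2*X2) + r1*(r1*X2-r2*X1)) by ring.
  rewrite PR, W1, W2, V1, V2, H3, H4, PS, QR in *. split; lra.
Qed.

Lemma row2 (e : bool -> qubit) : orthonormal_basis e -> forall A B : Cx,
  Cnorm2 (Cadd (Cmul (Cconj (e false false)) A) (Cmul (Cconj (e false true)) B)) +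
  Cnorm2 (Cadd (Cmul (Cconj (e true false)) A) (Cmul (Cconj (e true true)) B)) = Cnorm2 A + Cnorm2 B.
Proof.
  intros He A B.
  pose proof (He false false) as h1. pose proof (He true true) as h2. pose proof (He false true) as h3.
  unfold inner2, Ckron, Cadd, Cmul, Cconj, C0 in *; simpl in *.
  destruct (e false false) as [p1 p2], (e false true) as [q1 q2], (e true false) as [r1 r2], (e true true) as [s1 s2], A as [a1 a2], B as [b1 b2].
  simpl in *. injection h1; injection h2; injection h3; intros.
  idtac.
  unfold Cnorm2; simpl.
  destruct (rows p1 p2 q1 q2 r1 r2 s1 s2) as [R1 [R2 [R3 R4]]]; try lra.
  match goal with |- ?L = ?Rh => assert (I : L - Rh = (p1*p1+p2*p2+r1*r1+r2*r2 - 1)*(a1*a1+a2*a2) + (q1*q1+q2*q2+s1*s1+s2*s2-1)*(b1*b1+b2*b2) + 2*(p1*q1+p2*q2+r1*s1+r2*s2)*(a1*b1+a2*b2) - 2*(p2*q1-p1*q2+r2*s1-r1*s2)*(a1*b2-a2*b1)) by ring end.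
  rewrite R1, R2, R3, R4 in I. lra.
Qed.
Definition ip n (u v : list bool -> Cx) := Csum (bitstrings n) (fun x => Cmul (Cconj (u x)) (v x)).
Fixpoint pip (e f : bool -> qubit) (i j : list bool) : Cx :=
  match i, j with
  | [], [] => (1, 0)
  | b :: i', b' :: j' => Cmul (inner2 (e b) (f b')) (pip e f i' j')
  | _, _ => C0
  end.

Lemma Csum_bitsS n g : Csum (bitstrings (S n)) g =
  Cadd (Csum (bitstrings n) (fun x => g (false::x))) (Csum (bitstrings n) (fun x => g (true::x))).
Proof. simpl. rewrite Csum_app, !Csum_map. auto. Qed.
Lemma Rsum_bitsS n g : Rsum (bitstrings (S n)) g =
  Rsum (bitstrings n) (fun x => g (false::x)) + Rsum (bitstrings n) (fun x => g (true::x)).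
Proof. simpl. rewrite Rsum_app, !Rsum_map. auto. Qed.

Lemma ip_cons e n b j v : ip (S n) (prod_vec e (b::j)) v =
  Cadd (Cmul (Cconj (e b false)) (ip n (prod_vec e j) (fun x => v (false::x))))
       (Cmul (Cconj (e b true)) (ip n (prod_vec e j) (fun x => v (true::x)))).
Proof.
  unfold ip. rewrite Csum_bitsS. rewrite <- !Csum_scale. f_equal; apply Csum_ext; intros; simpl; ceq.
Qed.

Lemma ip_pv e f n : forall i j, length i = n -> length j = n ->
  ip n (prod_vec e i) (prod_vec f j) = pip e f i j.
Proof.
  induction n; intros i j Hi Hj.
  - destruct i; destruct j; simpl in *; try discriminate. unfold ip; simpl. ceq.
  - destruct i as [|b i]; destruct j as [|b' j]; simpl in Hi, Hj; try discriminate.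
    injection Hi; injection Hj; intros.
    rewrite ip_cons. simpl prod_vec.
    assert (E : forall y, (fun x => Cmul (f b' y) (prod_vec f j x)) = (fun x => Cmul (f b' y) (prod_vec f j x))) by auto.
    unfold ip in *. rewrite <- !Csum_scale.
    replace (Csum (bitstrings n) (fun x => Cmul (Cconj (e b false)) (Cmul (Cconj (prod_vec e i x)) (Cmul (f b' false) (prod_vec f j x)))))
      with (Cmul (Cmul (Cconj (e b false)) (f b' false)) (Csum (bitstrings n) (fun x => Cmul (Cconj (prod_vec e i x)) (prod_vec f j x)))).
    2:{ rewrite <- Csum_scale. apply Csum_ext; intros; ceq. }
    replace (Csum (bitstrings n) (fun x => Cmul (Cconj (e b true)) (Cmul (Cconj (prod_vec e i x)) (Cmul (f b' true) (prod_vec f j x)))))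
      with (Cmul (Cmul (Cconj (e b true)) (f b' true)) (Csum (bitstrings n) (fun x => Cmul (Cconj (prod_vec e i x)) (prod_vec f j x)))).
    2:{ rewrite <- Csum_scale. apply Csum_ext; intros; ceq. }
    rewrite IHn by auto. unfold inner2. ceq.
Qed.

Lemma parseval e (He : orthonormal_basis e) n : forall v,
  Rsum (bitstrings n) (fun j => Cnorm2 (ip n (prod_vec e j) v)) = Rsum (bitstrings n) (fun x => Cnorm2 (v x)).
Proof.
  induction n; intros v.
  - simpl. unfold ip; simpl. destruct (v []) as [a b]. unfold Cnorm2, Cmul, Cconj, Cadd, C0; simpl. ring.
  - rewrite !Rsum_bitsS. rewrite !(Rsum_ext _ (fun j => Cnorm2 (ip (S n) (prod_vec e (_ :: j)) v)) _ (fun j _ => f_equal Cnorm2 (ip_cons e n _ j v))).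
    rewrite <- Rsum_add. rewrite (Rsum_ext _ _ (fun j => Cnorm2 (ip n (prod_vec e j) (fun x => v (false :: x))) + Cnorm2 (ip n (prod_vec e j) (fun x => v (true :: x))))).
    2:{ intros; apply row2; auto. }
    rewrite Rsum_add, !IHn. auto.
Qed.

Definition ldec := list_eq_dec Bool.bool_dec.

Lemma pip_orth e (He : orthonormal_basis e) : forall i j, length i = length j ->
  pip e e i j = if ldec i j then (1,0) else C0.
Proof.
  induction i as [|b i IH]; destruct j as [|b' j]; simpl; intros H; try discriminate.
  - destruct (ldec [] []); [auto|congruence].
  - injection H; intros H'. rewrite He, IH by auto.
    destruct (ldec i j); destruct (ldec (b::i) (b'::j)); destruct b, b'; unfold Ckron; simpl;
      try congruence; ceq.
Qed.

Definition cc (mu nu : bool -> qubit) := overlap_c mu nu.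

Lemma pip_bound mu nu : forall j i, length i = length j ->
  Cnorm2 (pip nu mu j i) <= overlap_c mu nu ^ length j.
Proof.
  induction j as [|b j IH]; destruct i as [|b' i]; simpl; intros H; try discriminate.
  - unfold Cnorm2; simpl; lra.
  - injection H; intros H'. rewrite Cnorm2_mul.
    assert (inner2 (nu b) (mu b') = Cconj (inner2 (mu b') (nu b))) by (unfold inner2; ceq).
    rewrite H0, Cnorm2_conj.
    assert (Hc : Cnorm2 (inner2 (mu b') (nu b)) <= overlap_c mu nu).
    { unfold overlap_c. destruct b, b'.
      - eapply Rle_trans; [|apply Rmax_r]. apply Rmax_r.
      - eapply Rle_trans; [|apply Rmax_l]. apply Rmax_r.
      - eapply Rle_trans; [|apply Rmax_r]. apply Rmax_l.
      - eapply Rle_trans; [|apply Rmax_l]. apply Rmax_l. }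
    apply Rmult_le_compat; auto using Cnorm2_ge0.
Qed.

Lemma ip_phi e mu J alpha Cv n k j : length j = n ->
  ip n (prod_vec e j) (fun x => phi_state n mu J alpha Cv x k) =
  Csum (filter J (bitstrings n)) (fun i => Cmul (Cmul (alpha i) (Cv i k)) (pip e mu j i)).
Proof.
  intros Hj. unfold ip, phi_state.
  rewrite (Csum_ext _ _ (fun x => Csum (filter J (bitstrings n)) (fun i => Cmul (Cmul (alpha i) (Cv i k)) (Cmul (Cconj (prod_vec e j x)) (prod_vec mu i x))))).
  2:{ intros x _. rewrite <- Csum_scale. apply Csum_ext; intros; ceq. }
  rewrite Csum_swap. apply Csum_ext. intros i Hi.
  rewrite Csum_scale. f_equal. apply filter_In in Hi. destruct Hi as [Hi _]. apply bits_len in Hi.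
  apply (ip_pv e mu n j i); auto.
Qed.

Lemma collapse (L : list (list bool)) (z : list bool -> Cx) i : NoDup L -> In i L ->
  Csum L (fun i' => if ldec i i' then z i' else C0) = z i.
Proof.
  induction L as [|a L IH]; simpl; intros Hn Hi. destruct Hi.
  inversion Hn; subst. destruct (ldec i a).
  - subst. rewrite (Csum_ext _ _ (fun _ => C0)). rewrite Csum_zero; ceq.
    intros x Hx. destruct (ldec a x); auto. subst; contradiction.
  - destruct Hi as [Hi|Hi]. subst; congruence. rewrite IH; auto. ceq.
Qed.

Lemma coef_eq mu (Hmu : orthonormal_basis mu) n J (beta : list bool -> Cx) j : In j (bitstrings n) ->
  Csum (filter J (bitstrings n)) (fun i => Cmul (beta i) (pip mu mu j i)) = if J j then beta j else C0.
Proof.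
  intros Hj. rewrite Csum_filter.
  rewrite (Csum_ext _ _ (fun i => if ldec j i then (if J i then beta i else C0) else C0)).
  - apply collapse; auto using bits_nodup.
  - intros i Hi. rewrite pip_orth by (apply bits_len in Hi; apply bits_len in Hj; congruence).
    destruct (ldec j i); destruct (J i); ceq.
Qed.

Lemma alpha_norm mu (Hmu : orthonormal_basis mu) n J alpha Cv d
  (HC : forall i, In i (bitstrings n) -> J i = true -> normC_sq d (Cv i) = 1)
  (Hphi : norm_joint_sq n d (phi_state n mu J alpha Cv) = 1) :
  Rsum (filter J (bitstrings n)) (fun i => Cnorm2 (alpha i)) = 1.
Proof.
  rewrite <- Hphi. unfold norm_joint_sq. rewrite Rsum_swap.
  rewrite (Rsum_ext (seq 0 d) _ (fun k => Rsum (filter J (bitstrings n)) (fun i => Cnorm2 (alpha i) * Cnorm2 (Cv i k)))).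
  - rewrite Rsum_swap. apply Rsum_ext. intros i Hi. rewrite Rsum_scale.
    apply filter_In in Hi. destruct Hi as [Hi HJ]. unfold normC_sq in HC. rewrite HC by auto. ring.
  - intros k _. rewrite <- (parseval mu Hmu n (fun x => phi_state n mu J alpha Cv x k)).
    rewrite Rsum_filter. apply Rsum_ext. intros j Hj.
    rewrite ip_phi by (apply bits_len; auto). rewrite coef_eq by auto.
    destruct (J j). apply Cnorm2_mul. unfold Cnorm2, C0; simpl; ring.
Qed.

Lemma Cmul_sum_mid {A} (l : list A) a f b : Cmul a (Cmul (Csum l f) b) = Csum l (fun k => Cmul (Cmul a b) (f k)).
Proof. rewrite Csum_scale. ceq. Qed.

Lemma expect_eq n d (phi : list bool -> nat -> Cx) v :
  fst (expect n (partial_trace_C d phi) v) = Rsum (seq 0 d) (fun k => Cnorm2 (ip n v (fun x => phi x k))).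
Proof.
  unfold expect, partial_trace_C.
  rewrite (Csum_ext _ _ (fun x => Csum (seq 0 d) (fun k => Csum (bitstrings n) (fun y =>
        Cmul (Cmul (Cconj (v x)) (v y)) (Cmul (phi x k) (Cconj (phi y k))))))).
  2:{ intros x _. rewrite <- Csum_swap. apply Csum_ext. intros y _. apply Cmul_sum_mid. }
  rewrite Csum_swap. rewrite fst_Csum. apply Rsum_ext. intros k _.
  rewrite (Csum_ext _ _ (fun x => Cmul (Cmul (Cconj (v x)) (phi x k)) (Csum (bitstrings n) (fun y => Cmul (Cconj (phi y k)) (v y))))).
  2:{ intros x _. rewrite <- Csum_scale. apply Csum_ext; intros; ceq. }
  rewrite (Csum_ext _ _ (fun x => Cmul (Csum (bitstrings n) (fun y => Cmul (Cconj (phi y k)) (v y))) (Cmul (Cconj (v x)) (phi x k)))) by (intros; ceq).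
  rewrite Csum_scale.
  replace (Csum (bitstrings n) (fun y => Cmul (Cconj (phi y k)) (v y))) with (Cconj (ip n v (fun x => phi x k))).
  - change (Csum (bitstrings n) (fun x => Cmul (Cconj (v x)) (phi x k))) with (ip n v (fun x => phi x k)).
    destruct (ip n v (fun x => phi x k)). unfold Cnorm2, Cmul, Cconj; simpl; ring.
  - unfold ip. rewrite Csum_conj. apply Csum_ext; intros; ceq.
Qed.

Lemma Rsum_ge0 {A} (l : list A) f : (forall x, In x l -> 0 <= f x) -> 0 <= Rsum l f.
Proof. intros H. rewrite <- (Rsum_zero l). apply Rsum_le; auto. Qed.

Lemma cs_step (z1 z2 t1 t2 A Bq Sa Sb : R) :
  0 <= A -> 0 <= Bq -> 0 <= Sa -> 0 <= Sb ->
  z1*z1+z2*z2 = A*Bq -> t1*t1+t2*t2 <= Sa*Sb ->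
  (z1+t1)*(z1+t1)+(z2+t2)*(z2+t2) <= (A+Sa)*(Bq+Sb).
Proof.
  intros hA hB hSa hSb hz ht.
  assert (K1 : (z1*t1+z2*t2)^2 <= (z1*z1+z2*z2)*(t1*t1+t2*t2)).
  { assert (E : (z1*z1+z2*z2)*(t1*t1+t2*t2) - (z1*t1+z2*t2)^2 = (z1*t2-z2*t1)^2) by ring.
    assert (0 <= (z1*t2-z2*t1)^2) by apply pow2_ge_0. lra. }
  assert (K2 : (z1*z1+z2*z2)*(t1*t1+t2*t2) <= A*Bq*(Sa*Sb)) by (rewrite hz; apply Rmult_le_compat_l; nra).
  assert (K3 : 4*(A*Bq*(Sa*Sb)) <= (A*Sb+Bq*Sa)^2).
  { assert (E : (A*Sb+Bq*Sa)^2 - 4*(A*Bq*(Sa*Sb)) = (A*Sb-Bq*Sa)^2) by ring.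
    assert (0 <= (A*Sb-Bq*Sa)^2) by apply pow2_ge_0. lra. }
  assert (K4 : (2*(z1*t1+z2*t2))^2 <= (A*Sb+Bq*Sa)^2).
  { replace ((2*(z1*t1+z2*t2))^2) with (4*(z1*t1+z2*t2)^2) by ring. lra. }
  assert (K5 : 2*(z1*t1+z2*t2) <= A*Sb+Bq*Sa).
  { assert (0 <= A*Sb+Bq*Sa) by nra. destruct (Rle_or_lt (2*(z1*t1+z2*t2)) (A*Sb+Bq*Sa)); auto. nra. }
  nra.
Qed.

Lemma cauchy_schwarz {X} (L : list X) a b :
  Cnorm2 (Csum L (fun i => Cmul (a i) (b i))) <= Rsum L (fun i => Cnorm2 (a i)) * Rsum L (fun i => Cnorm2 (b i)).
Proof.
  induction L as [|x L IH]; simpl.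
  - unfold Cnorm2, C0; simpl; lra.
  - pose proof (Cnorm2_mul (a x) (b x)) as hz.
    assert (h1 : 0 <= Rsum L (fun i => Cnorm2 (a i))) by (apply Rsum_ge0; intros; apply Cnorm2_ge0).
    assert (h2 : 0 <= Rsum L (fun i => Cnorm2 (b i))) by (apply Rsum_ge0; intros; apply Cnorm2_ge0).
    pose proof (Cnorm2_ge0 (a x)). pose proof (Cnorm2_ge0 (b x)).
    revert hz IH. generalize (Cmul (a x) (b x)) (Csum L (fun i => Cmul (a i) (b i))).
    intros [z1 z2] [t1 t2]. unfold Cnorm2, Cadd; simpl. intros hz IH.
    apply cs_step; auto.
Qed.

Lemma upper mu nu (Hmu : orthonormal_basis mu) n J alpha Cv d
  (HC : forall i, In i (bitstrings n) -> J i = true -> normC_sq d (Cv i) = 1)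
  (Hphi : norm_joint_sq n d (phi_state n mu J alpha Cv) = 1) j :
  In j (bitstrings n) ->
  fst (expect n (partial_trace_C d (phi_state n mu J alpha Cv)) (prod_vec nu j))
  <= INR (length (filter J (bitstrings n))) * overlap_c mu nu ^ n.
Proof.
  intros Hj. apply bits_len in Hj. rewrite expect_eq.
  set (J' := filter J (bitstrings n)).
  apply Rle_trans with (Rsum (seq 0 d) (fun k => Rsum J' (fun i => Cnorm2 (Cv i k) * Cnorm2 (pip nu mu j i)))).
  - apply Rsum_le. intros k _. rewrite ip_phi by auto.
    rewrite (Csum_ext _ _ (fun i => Cmul (alpha i) (Cmul (Cv i k) (pip nu mu j i)))) by (intros; ceq).
    eapply Rle_trans; [apply cauchy_schwarz|].
    unfold J'. rewrite (alpha_norm mu Hmu n J alpha Cv d HC Hphi). rewrite Rmult_1_l.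
    apply Req_le. apply Rsum_ext. intros. apply Cnorm2_mul.
  - rewrite Rsum_swap. rewrite <- Rsum_const.
    apply Rsum_le. intros i Hi. 
    rewrite (Rsum_ext _ _ (fun k => Cnorm2 (pip nu mu j i) * Cnorm2 (Cv i k))) by (intros; ring).
    rewrite Rsum_scale. unfold J' in Hi. apply filter_In in Hi. destruct Hi as [Hi HJ].
    pose proof (HC i Hi HJ) as h. unfold normC_sq in h. rewrite h, Rmult_1_r.
    rewrite <- Hj. apply pip_bound. apply bits_len in Hi. congruence.
Qed.

Lemma trace_one nu (Hnu : orthonormal_basis nu) n d phi :
  norm_joint_sq n d phi = 1 ->
  Rsum (bitstrings n) (fun j => fst (expect n (partial_trace_C d phi) (prod_vec nu j))) = 1.
Proof.
  intros H. rewrite <- H. unfold norm_joint_sq.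
  rewrite (Rsum_ext _ _ _ (fun j _ => expect_eq n d phi (prod_vec nu j))).
  rewrite Rsum_swap, (Rsum_swap (bitstrings n)). apply Rsum_ext. intros k _.
  apply parseval; auto.
Qed.

Fixpoint Pw (x : R) (a : bool) (i : list bool) : R :=
  match i with [] => 1 | b :: i' => (if Bool.eqb b a then 1 - x else x) * Pw x a i' end.
Definition kn a (i : list bool) := length (filter (fun b => negb (Bool.eqb b a)) i).
Definition ka a (i : list bool) := length (filter (fun b => Bool.eqb b a) i).

Lemma exp_le x y : x <= y -> exp x <= exp y.
Proof. intros [H|H]. left; apply exp_increasing; auto. subst; lra. Qed.
Lemma ln_le x y : 0 < x -> x <= y -> ln x <= ln y.
Proof. intros H [H'|H']. left; apply ln_increasing; auto. subst; lra. Qed.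

Lemma Pw_sum x a n : Rsum (bitstrings n) (Pw x a) = 1.
Proof.
  induction n. simpl. ring.
  rewrite Rsum_bitsS. simpl Pw. rewrite !Rsum_scale, IHn. destruct a; simpl; ring.
Qed.

Lemma Pw_eq x a i : Pw x a i = x ^ kn a i * (1 - x) ^ ka a i.
Proof.
  induction i as [|b i IH]; unfold kn, ka in *; simpl. ring.
  destruct (Bool.eqb b a); simpl; rewrite IH; ring.
Qed.

Lemma kn_ka a i : (kn a i + ka a i = length i)%nat.
Proof. induction i as [|b i IH]; unfold kn, ka in *; simpl; auto. destruct (Bool.eqb b a); simpl; lia. Qed.

Lemma Pw_ge0 x a i : 0 <= x <= 1 -> 0 <= Pw x a i.
Proof. intros H. induction i; simpl. lra. destruct (Bool.eqb a0 a); apply Rmult_le_pos; lra. Qed.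

Lemma Pw_lower x a i : 0 < x <= 1/2 -> INR (kn a i) <= INR (length i) * x ->
  exp (INR (length i) * x * ln x + INR (length i) * (1 - x) * ln (1 - x)) <= Pw x a i.
Proof.
  intros Hx Hk. rewrite Pw_eq.
  assert (P1 : 0 < x ^ kn a i) by (apply pow_lt; lra).
  assert (P2 : 0 < (1 - x) ^ ka a i) by (apply pow_lt; lra).
  rewrite <- (exp_ln (x ^ kn a i * (1 - x) ^ ka a i)) by (apply Rmult_lt_0_compat; auto).
  apply exp_le. rewrite ln_mult, !ln_pow by (auto; lra).
  pose proof (kn_ka a i) as E. apply (f_equal INR) in E. rewrite plus_INR in E.
  assert (Hl : ln x <= ln (1 - x)) by (apply ln_le; lra).
  rewrite <- E in *. nra.
Qed.

Lemma counting x a n (J : list bool -> bool) : 0 < x <= 1/2 ->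
  (forall i, In i (bitstrings n) -> J i = true -> INR (kn a i) <= INR n * x) ->
  INR (length (filter J (bitstrings n))) * exp (INR n * x * ln x + INR n * (1 - x) * ln (1 - x)) <= 1.
Proof.
  intros Hx HJ. rewrite <- Rsum_const.
  apply Rle_trans with (Rsum (bitstrings n) (Pw x a)); [|rewrite Pw_sum; lra].
  apply Rle_trans with (Rsum (filter J (bitstrings n)) (Pw x a)).
  - apply Rsum_le. intros i Hi. apply filter_In in Hi. destruct Hi as [Hi Hj].
    pose proof (proj1 (bits_len n i) Hi) as Hl. rewrite <- Hl. apply Pw_lower; auto.
    rewrite Hl; auto.
  - rewrite Rsum_filter. apply Rsum_le. intros i _. destruct (J i). lra. apply Pw_ge0; lra.
Qed.

Lemma fold_max_ge {X} (l : list X) f d : d <= fold_right (fun y acc => Rmax (f y) acc) d l /\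
  forall j, In j l -> f j <= fold_right (fun y acc => Rmax (f y) acc) d l.
Proof.
  induction l as [|x l IH]; simpl. split; [lra| intros _ []].
  destruct IH as [I1 I2]. split.
  - eapply Rle_trans; [exact I1|apply Rmax_r].
  - intros j [<-|Hj]. apply Rmax_l. eapply Rle_trans; [apply I2; auto|apply Rmax_r].
Qed.

Lemma fold_max_le {X} (l : list X) f d B : d <= B -> (forall j, In j l -> f j <= B) ->
  fold_right (fun y acc => Rmax (f y) acc) d l <= B.
Proof.
  induction l as [|x l IH]; simpl; intros Hd H. auto.
  apply Rmax_lub; auto.
Qed.

Lemma Rmax_list_ge {X} (l : list X) f j : In j l -> f j <= Rmax_list l f.
Proof.
  destruct l as [|x l]; simpl. intros []. intros [<-|Hj]. apply (proj1 (fold_max_ge l f _)). apply (proj2 (fold_max_ge l f _)); auto.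
Qed.

Lemma Rmax_list_le {X} (l : list X) f B : (forall j, In j l -> f j <= B) -> l <> [] -> Rmax_list l f <= B.
Proof.
  destruct l as [|x l]; simpl. congruence. intros H _. apply fold_max_le; auto.
Qed.

Lemma bits_length n : length (bitstrings n) = (2 ^ n)%nat.
Proof. induction n; simpl; auto. rewrite length_app, !length_map, IHn. lia. Qed.

Lemma filter_length_le {X} (J : X -> bool) l : (length (filter J l) <= length l)%nat.
Proof. induction l; simpl; auto. destruct (J a); simpl; lia. Qed.

Lemma c_pos mu nu : orthonormal_basis mu -> orthonormal_basis nu -> 0 < overlap_c mu nu.
Proof.
  intros Hmu Hnu. pose proof (row2 nu Hnu (mu false false) (mu false true)) as H.
  pose proof (Hmu false false) as h. unfold inner2, Ckron in h; simpl in h.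
  assert (E : Cnorm2 (mu false false) + Cnorm2 (mu false true) = 1).
  { unfold Cnorm2. destruct (mu false false), (mu false true). unfold Cadd, Cmul, Cconj in h; simpl in h.
    injection h; intros; simpl; lra. }
  rewrite E in H.
  assert (h1 : Cnorm2 (Cadd (Cmul (Cconj (nu false false)) (mu false false)) (Cmul (Cconj (nu false true)) (mu false true))) <= overlap_c mu nu).
  { replace (Cadd (Cmul (Cconj (nu false false)) (mu false false)) (Cmul (Cconj (nu false true)) (mu false true)))
      with (Cconj (inner2 (mu false) (nu false))) by (unfold inner2; ceq).
    rewrite Cnorm2_conj. unfold overlap_c. eapply Rle_trans; [|apply Rmax_l]. apply Rmax_l. }
  assert (h2 : Cnorm2 (Cadd (Cmul (Cconj (nu true false)) (mu false false)) (Cmul (Cconj (nu true true)) (mu false true))) <= overlap_c mu nu).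
  { replace (Cadd (Cmul (Cconj (nu true false)) (mu false false)) (Cmul (Cconj (nu true true)) (mu false true)))
      with (Cconj (inner2 (mu false) (nu true))) by (unfold inner2; ceq).
    rewrite Cnorm2_conj. unfold overlap_c. eapply Rle_trans; [|apply Rmax_l]. apply Rmax_r. }
  lra.
Qed.

Theorem mainTheorem2
  (mu nu : bool -> qubit)
  (Hmu : orthonormal_basis mu) (Hnu : orthonormal_basis nu)
  (n : nat) (a : bool) (w delta : R)
  (Hw : 0 <= w <= 1) (Hdelta : 0 < delta)
  (J : list bool -> bool)
  (HJ : forall i, In i (bitstrings n) -> J i = true -> weight a i <= w + delta)
  (d : nat) (alpha : list bool -> Cx) (Cv : list bool -> nat -> Cx)
  (HC : forall i, In i (bitstrings n) -> J i = true -> normC_sq d (Cv i) = 1)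
  (Hphi : norm_joint_sq n d (phi_state n mu J alpha Cv) = 1) :
  Hmin_N n nu (partial_trace_C d (phi_state n mu J alpha Cv))
    >= - INR n * log2 (overlap_c mu nu) - INR n * Hbar (w + delta).
Proof.
  set (x := w + delta). assert (Hx : 0 < x) by (unfold x; lra).
  set (c := overlap_c mu nu). assert (Hc : 0 < c) by apply (c_pos mu nu Hmu Hnu).
  set (f := fun j => fst (expect n (partial_trace_C d (phi_state n mu J alpha Cv)) (prod_vec nu j))).
  set (M := Rmax_list (bitstrings n) f).
  set (K := INR (length (filter J (bitstrings n)))).
  assert (Hne : bitstrings n <> []).
  { intros H. assert (In (repeat false n) (bitstrings n)) by (apply bits_len, repeat_length). rewrite H in H0; destruct H0. }
  assert (HM1 : M <= K * c ^ n).
  { apply Rmax_list_le; auto. intros j Hj. apply upper; auto. }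
  assert (HM0 : 0 < M).
  { destruct (Rle_or_lt M 0) as [H|H]; auto. exfalso.
    pose proof (trace_one nu Hnu n d (phi_state n mu J alpha Cv) Hphi) as T.
    assert (Rsum (bitstrings n) f <= Rsum (bitstrings n) (fun _ => 0)).
    { apply Rsum_le. intros j Hj. eapply Rle_trans; [apply Rmax_list_ge; eauto|]. exact H. }
    rewrite Rsum_zero in H0. unfold f in H0. lra. }
  assert (HK : 0 < K).
  { destruct (Rle_or_lt K 0); auto. assert (0 < c ^ n) by (apply pow_lt; auto). nra. }
  assert (Hln2 : 0 < ln 2) by (pose proof ln_lt_2; lra).
  assert (HlnM : ln M <= ln K + INR n * ln c).
  { rewrite <- ln_pow by auto. rewrite <- ln_mult by (auto; apply pow_lt; auto). apply ln_le; auto. }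
  assert (HlnK : ln K <= INR n * Hbar x * ln 2).
  { unfold Hbar. destruct (Rlt_dec x 0) as [h|_]; [lra|]. destruct (Rle_dec x (1/2)) as [h|h].
    - destruct (Req_EM_T x 0) as [h'|_]; [lra|].
      assert (Hcnt := counting x a n J (conj Hx h)).
      assert (Hcnt' : K * exp (INR n * x * ln x + INR n * (1 - x) * ln (1 - x)) <= 1).
      { apply Hcnt. intros i Hi Hj. pose proof (HJ i Hi Hj) as hw. unfold weight in hw. fold x in hw.
        apply bits_len in Hi. rewrite Hi in hw. fold (kn a i) in hw.
        destruct n as [|m].
        - unfold kn. simpl. destruct i; [|discriminate]. simpl. lra.
        - assert (0 < INR (S m)) by (apply lt_0_INR; lia).
          unfold Rdiv in hw. apply Rmult_le_compat_r with (r := INR (S m)) in hw; [|lra].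
          rewrite Rmult_assoc, Rinv_l in hw by lra. lra. }
      assert (ln (K * exp (INR n * x * ln x + INR n * (1 - x) * ln (1 - x))) <= ln 1).
      { apply ln_le; auto. apply Rmult_lt_0_compat; auto. apply exp_pos. }
      rewrite ln_mult, ln_exp, ln_1 in H by (auto; apply exp_pos).
      unfold log2. field_simplify; [|lra]. lra.
    - assert (K <= 2 ^ n).
      { unfold K. apply Rle_trans with (INR (length (bitstrings n))). apply le_INR, filter_length_le.
        rewrite bits_length, pow_INR. replace (INR 2) with 2 by (simpl; lra). lra. }
      rewrite Rmult_1_r, <- ln_pow by lra. apply ln_le; auto. }
  unfold Hmin_N. fold f. fold M. unfold log2. fold c.
  apply Rle_ge. unfold Rdiv.
  apply Rmult_le_reg_r with (ln 2); auto.
  replace ((- INR n * (ln c * / ln 2) - INR n * Hbar x) * ln 2) with (- INR n * ln c - INR n * Hbar x * ln 2) by (field; lra).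
  replace (- (ln M * / ln 2) * ln 2) with (- ln M) by (field; lra).
  lra.
Qed.
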